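(* Assume $e_{-1}+e_{+1}<1$ and $\delta_{\tilde p}\neq 0$, and let $\alpha=1-(1-e_{-1}-e_{+1})\cdot\frac{\delta_p}{\delta_{\tilde p}}$. Then there is a constant $c>0$ such that for any measurable classifiers $f,f':\mathcal X\to\{-1,+1\}$, $$\mathbb E_{\tilde{\mathcal D}}[\mathbb 1_{\alpha\text{-peer}}(f(X),\tilde Y)]-\mathbb E_{\tilde{\mathcal D}}[\mathbb 1_{\alpha\text{-peer}}(f'(X),\tilde Y)]=c\,(1-e_{-1}-e_{+1})\bigl(\mathbb E_{\mathcal D}[\mathbb 1(f(X),Y)]-\mathbb E_{\mathcal D}[\mathbb 1(f'(X),Y)]\bigr).$$
   Context: Let $\mathcal X\subseteq\mathbb R^d$ and let $(X,Y)$ be a random pair with distribution $\mathcal D$ on $\mathcal X\times\{-1,+1\}$, with $p:=\mathbb P(Y=+1)\in(0,1)$. A noisy label $\tilde Y\in\{-1,+1\}$ is generated with noise rates $e_{+1}:=\mathbb P(\tilde Y=-1\mid Y=+1)$, $e_{-1}:=\mathbb P(\tilde Y=+1\mid Y=-1)$, where $\tilde Y$ is conditionally independent of $X$ given $Y$; $\tilde{\mathcal D}$ is the distribution of $(X,\tilde Y)$. Let $\delta_p:=\mathbb P(Y=+1)-\mathbb P(Y=-1)$ and $\delta_{\tilde p}:=\mathbb P(\tilde Y=+1)-\mathbb P(\tilde Y=-1)$. The 0-1 loss is $\mathbb 1(a,b)=1$ if $a\neq b$ and $0$ otherwise. For a weight $\alpha$, $$\mathbb E_{\tilde{\mathcal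 D}}[\mathbb 1_{\alpha\text{-peer}}(f(X),\tilde Y)]:=\mathbb E[\mathbb 1(f(X),\tilde Y)]-\alpha\,\mathbb E[\mathbb 1(f(X_1),\tilde Y_2)],$$ where $(X,\tilde Y),(X_1,\tilde Y_1),(X_2,\tilde Y_2)$ are i.i.d. draws from $\tilde{\mathcal D}$. *)

(* Defs.v *)
From mathcomp Require Import all_boot all_order all_algebra.
From mathcomp Require Import all_classical all_reals all_analysis.
Set Implicit Arguments. Unset Strict Implicit. Unset Printing Implicit Defensive.
Import Order.TTheory GRing.Theory Num.Theory.
Local Open Scope classical_set_scope.
Local Open Scope ring_scope.

(* Labels: true = +1, false = -1. *)

Section PeerDefs.
Context {R : realType} {d : measure_display} {Omega : measurableType d}.
Variable P : probability Omega R.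

Definition pr (A : set Omega) : R := fine (P A).

Definition cpr (A B : set Omega) : R := pr (A `&` B) / pr B.

Definition same_law {dT} {T : measurableType dT} (Z Z' : Omega -> T) : Prop :=
  forall A : set T, measurable A -> P (Z @^-1` A) = P (Z' @^-1` A).

Definition indep2 {dT dU} {T : measurableType dT} {U : measurableType dU}
  (Z1 : Omega -> T) (Z2 : Omega -> U) : Prop :=
  forall (A : set T) (B : set U), measurable A -> measurable B ->
    P (Z1 @^-1` A `&` Z2 @^-1` B) = (P (Z1 @^-1` A) * P (Z2 @^-1` B))%E.

(* Z is conditionally independent of W given the discrete label Y *)
Definition cond_indep_bool {dT} {T : measurableType dT}
  (Z : Omega -> bool) (W : Omega -> T) (Y : Omega -> bool) : Prop :=
  forall (A : set T) (a b : bool), measurable A ->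
    (P (W @^-1` A `&` [set w | Z w = a] `&` [set w | Y w = b]) *
       P [set w | Y w = b] =
     P (W @^-1` A `&` [set w | Y w = b]) *
       P ([set w | Z w = a] `&` [set w | Y w = b]))%E.

(* E[1(f(X), Y)] for a 0-1 loss = probability of disagreement *)
Definition err01 {dx} {Xs : measurableType dx}
  (f : Xs -> bool) (X : Omega -> Xs) (Y : Omega -> bool) : R :=
  pr [set w | f (X w) != Y w].

(* E[1_{alpha-peer}(f(X), Yt)] = E[1(f(X),Yt)] - alpha E[1(f(X1),Yt2)] *)
Definition peer_err {dx} {Xs : measurableType dx} (alpha : R)
  (f : Xs -> bool) (X X1 : Omega -> Xs) (Yt Yt2 : Omega -> bool) : R :=
  err01 f X Yt - alpha * err01 f X1 Yt2.

Definition delta (Y : Omega -> bool) : R :=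
  pr [set w | Y w = true] - pr [set w | Y w = false].

End PeerDefs.

(* Main.v *)
Require Import Defs.
From mathcomp Require Import all_boot all_order all_algebra.
From mathcomp Require Import all_classical all_reals all_analysis.
From mathcomp Require Import ring lra.
Import Order.TTheory GRing.Theory Num.Theory.
Local Open Scope classical_set_scope.
Local Open Scope ring_scope.

Lemma alg (R : realFieldType) (p p' qtt qft qtf qff a b a' b' : R) :
  p + p' = 1 -> 0 < p -> 0 < p' -> qtt + qft = p -> qtf + qff = p' ->
  (qtt + qtf) - (qft + qff) != 0 ->
  let ep := qft / p in let en := qtf / p' in
  let dY := p - p' in let dYt := (qtt + qtf) - (qft + qff) in
  let alpha := 1 - (1 - en - ep) * (dY / dYt) in
  let noisy a b := a * qft / p + b * qff / p' + (p - a) * qtt / p + (p' - b) * qtf / p' in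
  let peer a b := (a + b) * (qft + qff) + ((p - a) + (p' - b)) * (qtt + qtf) in
  (noisy a b - alpha * peer a b) - (noisy a' b' - alpha * peer a' b') =
  1 * (1 - en - ep) * ((b + (p - a)) - (b' + (p - a'))).
Proof.
move=> hs hp hp' h1 h2 hd ep en dY dYt alpha noisy peer.
rewrite /noisy /peer /alpha /en /ep /dY /dYt.
have hq : qft = p - qtt by rewrite -h1; ring.
have hq' : qff = p' - qtf by rewrite -h2; ring.
move: hd; rewrite hq hq' => hd.
have hp'' : p' = 1 - p by rewrite -hs; ring.
rewrite hp'' in hp' hd *.
field.
by rewrite hd (gt_eqF hp) (gt_eqF hp').
Qed.

Lemma mpre {dA} {A : measurableType dA} {dT} {T : measurableType dT} (g : A -> T) (B : set T) :
  measurable_fun setT g -> measurable B -> measurable (g @^-1` B).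
Proof. by move=> mg mB; rewrite -[_ @^-1` _]setTI; exact: mg. Qed.

Section H.
Context {R : realType} {d : measure_display} {Omega : measurableType d}.
Variable P : probability Omega R.

Lemma finP (A : set Omega) : measurable A -> P A \is a fin_num.
Proof. by move=> mA; apply: fin_num_measure. Qed.

Lemma prU (A B : set Omega) : measurable A -> measurable B -> A `&` B = set0 ->
  pr P (A `|` B) = pr P A + pr P B.
Proof.
move=> mA mB AB; rewrite /pr measureU // fineD //; exact: finP.
Qed.


Lemma mev (Z : Omega -> bool) b : measurable_fun setT Z ->
  measurable [set w | Z w = b].
Proof. by move=> mZ; exact: (mpre Z [set b] mZ). Qed.

Lemma pr_split (A : set Omega) (Z : Omega -> bool) : measurable A ->
  measurable_fun setT Z ->
  pr P A = pr P (A `&` [set w | Z w = true]) + pr P (A `&` [set w | Z w = false]).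
Proof.
move=> mA mZ.
rewrite -prU; first congr pr.
- by apply/seteqP; split=> w /=; [case E: (Z w) => Aw; [left|right] | case=> -[]].
- exact/measurableI/mev.
- exact/measurableI/mev.
- by apply/seteqP; split=> w //= [[_ ->] [_]].
Qed.

Lemma pr_splitl (A : set Omega) (Z : Omega -> bool) : measurable A ->
  measurable_fun setT Z ->
  pr P A = pr P ([set w | Z w = true] `&` A) + pr P ([set w | Z w = false] `&` A).
Proof. by move=> mA mZ; rewrite (pr_split _ _ mA mZ) setIC [in X in _ + X]setIC. Qed.

Lemma pr_neq (U V : Omega -> bool) : measurable_fun setT U -> measurable_fun setT V ->
  pr P [set w | U w != V w] =
  pr P ([set w | U w = true] `&` [set w | V w = false]) +
  pr P ([set w | U w = false] `&` [set w | V w = true]).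
Proof.
move=> mU mV; rewrite -prU; first congr pr.
- apply/seteqP; split=> w /=.
    by case: (U w); case: (V w) => //= _; [left|right].
  by case=> -[-> ->].
- by apply: measurableI; apply: mev.
- by apply: measurableI; apply: mev.
- by apply/seteqP; split=> w //= [[-> _] [+ _]].
Qed.

Lemma prT : pr P setT = 1.
Proof. by rewrite /pr probability_setT. Qed.

Lemma prM_eq (A B C D : set Omega) : measurable A -> measurable B ->
  measurable C -> measurable D -> (P A * P B = P C * P D)%E ->
  pr P A * pr P B = pr P C * pr P D.
Proof.
move=> mA mB mC mD h; rewrite /pr -!fineM ?h //; exact: finP.
Qed.

Lemma prM_eq1 (A C D : set Omega) : measurable A ->
  measurable C -> measurable D -> (P A = P C * P D)%E ->
  pr P A = pr P C * pr P D.
Proof.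
move=> mA mC mD h; rewrite /pr -!fineM ?h //; exact: finP.
Qed.

End H.

Theorem proposition1 (R : realType) (d : measure_display) (Omega : measurableType d)
  (P : probability Omega R) (dx : measure_display) (Xs : measurableType dx)
  (X X1 X2 : Omega -> Xs) (Y Yt Yt1 Yt2 : Omega -> bool)
  (mX : measurable_fun setT X) (mX1 : measurable_fun setT X1)
  (mX2 : measurable_fun setT X2) (mY : measurable_fun setT Y)
  (mYt : measurable_fun setT Yt) (mYt1 : measurable_fun setT Yt1)
  (mYt2 : measurable_fun setT Yt2)
  (hp : 0 < pr P [set w | Y w = true] < 1)
  (hcond : cond_indep_bool P Yt X Y)
  (hlaw1 : same_law P (fun w => (X1 w, Yt1 w)) (fun w => (X w, Yt w)))
  (hlaw2 : same_law P (fun w => (X2 w, Yt2 w)) (fun w => (X w, Yt w)))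
  (hind : indep2 P (fun w => (X1 w, Yt1 w)) (fun w => (X2 w, Yt2 w))) :
  let e_pos := cpr P [set w | Yt w = false] [set w | Y w = true] in
  let e_neg := cpr P [set w | Yt w = true] [set w | Y w = false] in
  e_neg + e_pos < 1 ->
  delta P Yt != 0 ->
  let alpha := 1 - (1 - e_neg - e_pos) * (delta P Y / delta P Yt) in
  exists c : R, 0 < c /\
    forall f f' : Xs -> bool, measurable_fun setT f -> measurable_fun setT f' ->
      peer_err P alpha f X X1 Yt Yt2 - peer_err P alpha f' X X1 Yt Yt2 =
      c * (1 - e_neg - e_pos) * (err01 P f X Y - err01 P f' X Y).
Proof.
move=> e_pos e_neg _ hd alpha; exists 1; split => // f f' mf mf'.
set p := pr P [set w | Y w = true].
move: hp; rewrite -/p => hp.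
set p' := pr P [set w | Y w = false].
set q := fun a b => pr P ([set w | Yt w = a] `&` [set w | Y w = b]).
have mYb b : measurable [set w | Y w = b] by exact: mev.
have mYtb b : measurable [set w | Yt w = b] by exact: mev.
have hs : p + p' = 1.
  by rewrite /p /p' -[in RHS](prT P) (pr_split P _ _ measurableT mY) !setTI.
have hp0 : 0 < p by case/andP: hp.
have hp'0 : 0 < p'.
  by case/andP: hp => _ h; lra.
have hq1 : q true true + q false true = p.
  by rewrite /q /p [in RHS](pr_splitl P _ _ (mYb true) mYt).
have hq2 : q true false + q false false = p'.
  by rewrite /q /p' [in RHS](pr_splitl P _ _ (mYb false) mYt).
have hYt b : pr P [set w | Yt w = b] = q b true + q b false.
  by rewrite /q (pr_split P _ _ (mYtb b) mY).
have hdYt : delta P Yt = (q true true + q true false) - (q false true + q false false).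
  by rewrite /delta !hYt.
have key : forall g : Xs -> bool, measurable_fun setT g ->
  exists a b,
    err01 P g X Yt = a * q false true / p + b * q false false / p' +
       (p - a) * q true true / p + (p' - b) * q true false / p' /\
    err01 P g X1 Yt2 = (a + b) * (q false true + q false false) +
       ((p - a) + (p' - b)) * (q true true + q true false) /\
    err01 P g X Y = b + (p - a).
  move=> g mg.
  have mgX : measurable_fun setT (fun w => g (X w)) by exact: measurableT_comp.
  have mgX1 : measurable_fun setT (fun w => g (X1 w)) by exact: measurableT_comp.
  have mgv v : measurable (g @^-1` [set v]) by exact: mpre.
  have mF v : measurable [set w | g (X w) = v] by exact: (mpre X (g @^-1` [set v]) mX (mgv v)).
  have mF1 v : measurable [set w | g (X1 w) = v] by exact: (mpre X1 (g @^-1` [set v]) mX1 (mgv v)).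
  set m := fun v c => pr P ([set w | g (X w) = v] `&` [set w | Y w = c]).
  have hm1 : m true true + m false true = p.
    by rewrite /p (pr_splitl P _ _ (mYb true) mgX).
  have hm2 : m true false + m false false = p'.
    by rewrite /p' (pr_splitl P _ _ (mYb false) mgX).
  have hn v a c : pr P ([set w | g (X w) = v] `&` [set w | Yt w = a] `&` [set w | Y w = c])
      * pr P [set w | Y w = c] = m v c * q a c.
    apply: prM_eq.
    - by apply: measurableI => //; apply: measurableI.
    - by [].
    - exact: measurableI.
    - exact: measurableI.
    - exact: (hcond (g @^-1` [set v]) a c (mgv v)).
  have hpc c : pr P [set w | Y w = c] != 0.
    by case: c; [exact: lt0r_neq0 | exact: lt0r_neq0].
  have hn' v a c : pr P ([set w | g (X w) = v] `&` [set w | Yt w = a] `&` [set w | Y w = c])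
      = m v c * q a c / pr P [set w | Y w = c].
    by rewrite -(hn v a c) mulfK.
  have hva v a : pr P ([set w | g (X w) = v] `&` [set w | Yt w = a]) =
      m v true * q a true / p + m v false * q a false / p'.
    by rewrite (pr_split P _ _ (measurableI _ _ (mF v) (mYtb a)) mY) !hn'.
  have hind1 v a : pr P ([set w | g (X1 w) = v] `&` [set w | Yt2 w = a]) =
      (m v true + m v false) * (q a true + q a false).
    have E1 : (fun w => (X1 w, Yt1 w)) @^-1` (g @^-1` [set v] `*` setT) = [set w | g (X1 w) = v].
      by apply/seteqP; split=> w /=; [case|].
    have E2 : (fun w => (X2 w, Yt2 w)) @^-1` (setT `*` [set a]) = [set w | Yt2 w = a].
      by apply/seteqP; split=> w /=; [case|].
    have E3 : (fun w => (X w, Yt w)) @^-1` (g @^-1` [set v] `*` setT) = [set w | g (X w) = v].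
      by apply/seteqP; split=> w /=; [case|].
    have E4 : (fun w => (X w, Yt w)) @^-1` (setT `*` [set a]) = [set w | Yt w = a].
      by apply/seteqP; split=> w /=; [case|].
    have mA : measurable (g @^-1` [set v] `*` [set: bool]) by exact: measurableX.
    have mB : measurable ([set: Xs] `*` [set a]) by exact: measurableX.
    have h := hind _ _ mA mB.
    rewrite (hlaw1 _ mA) (hlaw2 _ mB) E1 E2 E3 E4 in h.
    have mI : measurable ([set w | g (X1 w) = v] `&` [set w | Yt2 w = a]).
      by apply: measurableI => //; apply: mev.
    rewrite (prM_eq1 P _ _ _ mI (mF v) (mYtb a) h).
    by rewrite -hYt (pr_split P _ _ (mF v) mY).
  exists (m true true), (m true false); split; last split.
  - rewrite /err01 (pr_neq P _ _ mgX mYt) !hva -hm1 -hm2; rewrite /m; ring.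
  - rewrite /err01 (pr_neq P _ _ mgX1 mYt2) !hind1 -hm1 -hm2; rewrite /m; ring.
  - rewrite /err01 (pr_neq P _ _ mgX mY) -hm1; rewrite /m; ring.
have [a [b [h1 [h2 h3]]]] := key f mf.
have [a' [b' [h1' [h2' h3']]]] := key f' mf'.
rewrite /peer_err h1 h2 h3 h1' h2' h3' /alpha hdYt /e_neg /e_pos /cpr.
rewrite hdYt in hd.
exact: (@alg _ _ _ _ _ _ _ a b a' b' hs hp0 hp'0 hq1 hq2 hd).
Qed.
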